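(* Consider $n$ agents in the plane evolving according to the piecewise continuous-time dynamics described in the context, with blind-zone radius $\delta>0$. Suppose that at the beginning $t=k$ (an integer) of a time-interval $[k,k+1)$, the agents are not all confined in a disc of radius $\delta$. Then there is an agent which, with a strictly positive probability bounded below by a constant depending only on $n$ (conditionally on the configuration at time $k$), moves during $[k,k+1)$ a distance bounded away from zero by a constant depending only on $n$ and $\delta$ (not on the configuration).
   Context: Agents $1,\dots,n$ have positions $p_i(t)\in\mathbb{R}^2$. Fix $\delta>0$. For each integer $k\ge 0$ and each agent $i$, let $\chi^{(i)}_k$ be independent random variables, uniformly distributed on $[0,2\pi)$, and set the heading $\theta_i(t)=\chi^{(i)}_k$ for $t\in[k,k+1)$, with unit heading vector $\hat\theta_i(t)=(\cos\theta_i(t),\sin\theta_i(t))^\top$. The motion law is $\dot p_i(t)=\hat\theta_i(t)\,s_i(t)$, where $s_i(t)=0$ if there exists an agent $j$ with $d_{ij}(t)>\delta$ and $\hat\theta_i(t)^\top\big(p_j(t)-p_i(t)\big)\le 0$, and $s_i(t)=1$ otherwise. Here $d_{ij}(t)=\|p_i(t)-p_j(t)\|$. Each time-interval $[k,k+1)$ has length $\Delta t=1$. *)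

(* Defs.v *)
From HB Require Import structures.
From mathcomp Require Import all_boot all_order all_algebra.
From mathcomp Require Import all_classical all_reals all_analysis.
Set Implicit Arguments. Unset Strict Implicit. Unset Printing Implicit Defensive.
Import Order.TTheory GRing.Theory Num.Theory.
Import numFieldNormedType.Exports.
Local Open Scope classical_set_scope.
Local Open Scope ring_scope.

Section Model.
Variable R : realType.

Definition pt := (R * R)%type.

Definition dist2 (a b : pt) : R :=
  Num.sqrt ((a.1 - b.1) ^+ 2 + (a.2 - b.2) ^+ 2).

Definition head_dot (th : R) (a b : pt) : R :=
  cos th * (b.1 - a.1) + sin th * (b.2 - a.2).

Definition speed (n : nat) (delta th : R) (p : 'I_n -> pt) (i : 'I_n) : R :=
  if `[< exists j : 'I_n, delta < dist2 (p i) (p j) /\ head_dot th (p i) (p j) <= 0 >]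
  then 0 else 1.

Definition in_disc (n : nat) (delta : R) (x : 'I_n -> pt) : Prop :=
  exists c : pt, forall i, dist2 (x i) c <= delta.

(* p : [0,1] -> configurations is a (Caratheodory) solution on one time-interval
   [k,k+1) (time shifted to [0,1]) of  dp_i/dt = hat(theta_i) s_i(t), starting at x0,
   with the headings theta_i held constant:
   p_i(t) = x0_i + (int_0^t s_i(tau) dtau) hat(theta_i). *)
Definition interval_solution (n : nat) (delta : R) (theta : 'I_n -> R)
    (x0 : 'I_n -> pt) (p : R -> 'I_n -> pt) : Prop :=
  forall i : 'I_n,
    measurable_fun `[(0:R), 1] (fun t => speed delta (theta i) (p t) i) /\
    forall t : R, 0 <= t <= 1 ->
      let sig := \int[lebesgue_measure]_(tau in `[(0:R), t]) speed delta (theta i) (p tau) i in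
      p t i = ((x0 i).1 + sig * cos (theta i), (x0 i).2 + sig * sin (theta i)).

Definition uniform_0_2pi d (T : measurableType d) (P : probability T R)
    (X : T -> R) : Prop :=
  measurable_fun setT X /\
  forall B : set R, measurable B ->
    P (X @^-1` B) =
      (lebesgue_measure (B `&` `[(0%R : R), (2 * pi)%R[) * ((2 * pi)^-1)%:E)%E.

Definition mutually_independent d (T : measurableType d) (P : probability T R)
    (n : nat) (X : 'I_n -> T -> R) : Prop :=
  forall B : 'I_n -> set R, (forall i, measurable (B i)) ->
    P (\bigcap_(i in [set: 'I_n]) (X i @^-1` B i)) = (\prod_(i < n) P (X i @^-1` B i))%E.

End Model.

(* Main.v *)
Require Import Defs.
From HB Require Import structures.
From mathcomp Require Import all_boot all_order all_algebra.
From mathcomp Require Import all_classical all_reals all_analysis.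
From mathcomp Require Import lra ring measurable_realfun.
Import Order.TTheory GRing.Theory Num.Theory.
Import numFieldNormedType.Exports.
Local Open Scope classical_set_scope.
Local Open Scope ring_scope.
Section Integ.
Variable R : realType.
Notation mu := (@lebesgue_measure R).
Local Notation I f t := (integral (@lebesgue_measure R) `[(0:R), t] (fun x => (f x)%:E)).

Lemma int_bounds (f : R -> R) (t : R) :
  measurable_fun `[(0:R), 1] f -> (forall x, 0 <= f x <= 1) -> 0 <= t <= 1 ->
  0 <= \int[mu]_(x in `[(0:R), t]) f x <= t.
Proof.
move=> mf f01 /andP[t0 t1].
have mft : measurable_fun `[(0:R), t] f.
  apply: measurable_funS mf => //; apply: subset_itvl; rewrite bnd_simp //.
have h0 : (0 <= I f t)%E.
  by apply: integral_ge0 => x _; rewrite lee_fin; case/andP: (f01 x).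
have h1 : (I f t <= t%:E)%E.
  apply: (@le_trans _ _ (integral mu `[(0:R), t] (cst (1%:E : \bar R)))).
  - apply: ge0_le_integral => //.
    + by move=> x _; rewrite lee_fin; case/andP: (f01 x).
    + by apply/measurable_EFinP; exact: mft.
    + by move=> x _; rewrite lee_fin; case/andP: (f01 x).
  - rewrite integral_cst // mul1e.
    change (@lebesgue_measure R (`[0%R, t%R] : set R) <= t%:E)%E; rewrite lebesgue_measure_itv.
    rewrite /= lte_fin; case: ltP => _; rewrite ?lee_fin ?subr0 //.
rewrite /Rintegral.
have fin : I f t \is a fin_num.
  rewrite ge0_fin_numE //; exact: (le_lt_trans h1 (ltry _)).
apply/andP; split; first by rewrite fine_ge0.
by rewrite -lee_fin fineK.
Qed.

Lemma int_lower (f : R -> R) (s : R) :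
  measurable_fun `[(0:R), 1] f -> (forall x, 0 <= f x <= 1) -> 0 <= s <= 1 ->
  (forall x, 0 <= x <= s -> f x = 1) ->
  s <= \int[mu]_(x in `[(0:R), 1]) f x.
Proof.
move=> mf f01 /andP[s0 s1] f1.
have h1 : (I f 1%R <= 1%:E)%E.
  apply: (@le_trans _ _ (integral mu `[(0:R), 1] (cst (1%:E : \bar R)))).
  - apply: ge0_le_integral => //.
    + by move=> x _; rewrite lee_fin; case/andP: (f01 x).
    + by apply/measurable_EFinP; exact: mf.
    + by move=> x _; rewrite lee_fin; case/andP: (f01 x).
  - rewrite integral_cst // mul1e.
    change (@lebesgue_measure R (`[0%R, 1%R] : set R) <= 1%:E)%E; rewrite lebesgue_measure_itv.
    by rewrite /= lte_fin ltr01 ?subr0 ?sube0.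
have h2 : (s%:E <= I f 1%R)%E.
  apply: (@le_trans _ _ (I f s%R)).
  - have -> : I f s%R = integral mu `[(0:R), s] (cst (1%:E : \bar R)).
      apply: eq_integral => x; rewrite inE /= in_itv /= => hx; by rewrite f1.
    rewrite integral_cst // mul1e.
    change (@lebesgue_measure R (`[0%R, s%R] : set R) >= s%:E)%E; rewrite lebesgue_measure_itv.
    rewrite /= lte_fin; case: ltP => h; rewrite ?subr0 //.
    by rewrite oppr0 adde0.
  - apply: ge0_subset_integral => //.
    + by apply/measurable_EFinP; exact: mf.
    + by move=> x _; rewrite lee_fin; case/andP: (f01 x).
    + by apply: subset_itvl; rewrite bnd_simp.
rewrite /Rintegral.
have fin : I f 1%R \is a fin_num.
  rewrite ge0_fin_numE; first exact: (le_lt_trans h1 (ltry _)).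
  by apply: integral_ge0 => x _; rewrite lee_fin; case/andP: (f01 x).
by rewrite -lee_fin fineK.
Qed.
End Integ.
Section Geo.
Variable R : realType.

Lemma sqrt_le_of_sq (x y : R) : 0 <= x -> 0 <= y -> y ^+ 2 <= x ^+ 2 -> y <= x.
Proof. move=> x0 y0 h; nra. Qed.

Lemma margin_alg (ct st ca sa cb sb v1 v2 k : R) :
  ct ^+ 2 + st ^+ 2 = 1 -> ca ^+ 2 + sa ^+ 2 = 1 -> cb ^+ 2 + sb ^+ 2 = 1 ->
  0 < sa * cb + ca * sb -> 0 <= k -> k <= sa -> k <= sb ->
  0 <= v1 * (ct * cb + st * sb) + v2 * (st * cb - ct * sb) ->
  0 <= v1 * (ct * ca - st * sa) + v2 * (st * ca + ct * sa) ->
  k * Num.sqrt (v1 ^+ 2 + v2 ^+ 2) <= ct * v1 + st * v2.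
Proof.
set A1 := ct * cb + st * sb; set A2 := st * cb - ct * sb.
set B1 := ct * ca - st * sa; set B2 := st * ca + ct * sa.
set sg := sa * cb + ca * sb.
move=> ht ha hb sg0 k0 ka kb ha0 hb0.
set a := v1 * A1 + v2 * A2 in ha0 *; set b := v1 * B1 + v2 * B2 in hb0 *.
set q := v1 ^+ 2 + v2 ^+ 2.
have I1 : sg * (ct * v1 + st * v2) = sa * a + sb * b.
  rewrite /sg /a /b /A1 /A2 /B1 /B2; ring.
have eA : A1 ^+ 2 + A2 ^+ 2 = 1.
  have -> : A1 ^+ 2 + A2 ^+ 2 = (ct ^+ 2 + st ^+ 2) * (cb ^+ 2 + sb ^+ 2).
    by rewrite /A1 /A2; ring.
  by rewrite ht hb mulr1.
have eB : B1 ^+ 2 + B2 ^+ 2 = 1.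
  have -> : B1 ^+ 2 + B2 ^+ 2 = (ct ^+ 2 + st ^+ 2) * (ca ^+ 2 + sa ^+ 2).
    by rewrite /B1 /B2; ring.
  by rewrite ht ha mulr1.
have eS : A1 * B2 - A2 * B1 = sg.
  have -> : A1 * B2 - A2 * B1 = (ct ^+ 2 + st ^+ 2) * sg.
    by rewrite /A1 /A2 /B1 /B2 /sg; ring.
  by rewrite ht mul1r.
set cg := A1 * B1 + A2 * B2.
have G : (A1 * B2 - A2 * B1) ^+ 2 * q
   = (B1 ^+ 2 + B2 ^+ 2) * a ^+ 2 + (A1 ^+ 2 + A2 ^+ 2) * b ^+ 2 - 2 * a * b * cg.
  by rewrite /q /a /b /cg; ring.
rewrite eS eA eB !mul1r in G.
have cg1 : 0 <= 1 + cg.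
  have : 0 <= (A1 + B1) ^+ 2 + (A2 + B2) ^+ 2 by nra.
  have -> : (A1 + B1) ^+ 2 + (A2 + B2) ^+ 2 = (A1 ^+ 2 + A2 ^+ 2) + (B1 ^+ 2 + B2 ^+ 2) + 2 * cg.
    by rewrite /cg; ring.
  rewrite eA eB; lra.
have q0 : 0 <= q by rewrite /q; nra.
have sq := sqr_sqrtr q0.
have sq0 := sqrtr_ge0 q.
set r := Num.sqrt q in sq sq0 *.
have abr : sg * r <= a + b.
  apply: sqrt_le_of_sq; [lra | nra |].
  rewrite exprMn sq G.
  have : 0 <= 2 * a * b * (1 + cg).
    by apply: mulr_ge0 => //; apply: mulr_ge0 => //; apply: mulr_ge0.
  nra.
have : sg * (k * r) <= sg * (ct * v1 + st * v2).
  rewrite I1.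
  have : k * (a + b) <= sa * a + sb * b by nra.
  have : sg * (k * r) = k * (sg * r) by ring.
  nra.
by rewrite ler_pM2l.
Qed.
End Geo.
Section Dyn.
Variable R : realType.

Lemma cs_bound (v1 v2 c s : R) : c ^+ 2 + s ^+ 2 = 1 ->
  `|v1 * c + v2 * s| <= Num.sqrt (v1 ^+ 2 + v2 ^+ 2).
Proof.
move=> h; apply: sqrt_le_of_sq; [exact: sqrtr_ge0 | exact: normr_ge0 |].
rewrite sqr_sqrtr; last nra.
rewrite real_normK; last exact: num_real.
have -> : v1 ^+ 2 + v2 ^+ 2 = (v1 ^+ 2 + v2 ^+ 2) * (c ^+ 2 + s ^+ 2) by rewrite h mulr1.
have : 0 <= (v1 * s - v2 * c) ^+ 2 by apply: sqr_ge0.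
have -> : (v1 ^+ 2 + v2 ^+ 2) * (c ^+ 2 + s ^+ 2) = (v1 * c + v2 * s) ^+ 2 + (v1 * s - v2 * c) ^+ 2 by ring.
lra.
Qed.

Lemma speed01 n delta th (q : 'I_n -> pt R) i : 0 <= speed delta th q i <= 1.
Proof. rewrite /speed; case: ifP => _; lra. Qed.

Lemma cs1 (x : R) : cos x ^+ 2 + sin x ^+ 2 = 1.
Proof. exact: cos2Dsin2. Qed.

Lemma move_far n (delta kappa : R) (theta : 'I_n -> R) (x0 : 'I_n -> pt R) p i :
  0 < delta -> 0 < kappa -> kappa <= 1 ->
  (forall j, kappa * dist2 (x0 i) (x0 j) <= head_dot (theta i) (x0 i) (x0 j)) ->
  interval_solution delta theta x0 p ->
  Num.min 1 (kappa * delta / 8) <= dist2 (p 1 i) (x0 i).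
Proof.
move=> d0 k0 k1 marg sol.
set dm := Num.min 1 (kappa * delta / 8).
have dm1 : dm <= 1 by rewrite /dm ge_min lexx.
have dm2 : dm <= kappa * delta / 8 by rewrite /dm ge_min lexx orbT.
have dm0 : 0 < dm by rewrite /dm lt_min ltr01 /=; apply: divr_gt0 => //; apply: mulr_gt0.
set sig := fun j t => \int[lebesgue_measure]_(tau in `[(0:R), t]) speed delta (theta j) (p tau) j.
have sigb : forall j t, 0 <= t <= 1 -> 0 <= sig j t <= t.
  move=> j t ht; apply: int_bounds => //; first by case: (sol j).
  by move=> x; exact: speed01.
have pE : forall j t, 0 <= t <= 1 -> p t j = ((x0 j).1 + sig j t * cos (theta j), (x0 j).2 + sig j t * sin (theta j)).
  by move=> j t ht; case: (sol j) => _ h; exact: h.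
have fast : forall tau, 0 <= tau <= dm -> speed delta (theta i) (p tau) i = 1.
  move=> tau /andP[t0 t1].
  have ht : 0 <= tau <= 1 by apply/andP; split => //; lra.
  rewrite /speed; case: asboolP => // -[j [hd hh]]; exfalso.
  move: hd hh; rewrite /dist2 /head_dot (pE i tau ht) (pE j tau ht) /=.
  have := marg j; rewrite /dist2 /head_dot.
  case/andP: (sigb i tau ht) => si0 si1.
  case/andP: (sigb j tau ht) => sj0 sj1.
  set si := sig i tau in si0 si1 *; set sj := sig j tau in sj0 sj1 *; clearbody si sj.
  set c := cos (theta i); set s := sin (theta i).
  set cj := cos (theta j); set sj' := sin (theta j).
  have hc : c ^+ 2 + s ^+ 2 = 1 by exact: cs1.
  have hcj : cj ^+ 2 + sj' ^+ 2 = 1 by exact: cs1.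
  set v1 := (x0 j).1 - (x0 i).1; set v2 := (x0 j).2 - (x0 i).2.
  have eD : ((x0 i).1 - (x0 j).1) ^+ 2 + ((x0 i).2 - (x0 j).2) ^+ 2 = v1 ^+ 2 + v2 ^+ 2.
    by rewrite /v1 /v2; ring.
  rewrite eD.
  set D := Num.sqrt (v1 ^+ 2 + v2 ^+ 2).
  have D0 : 0 <= D by apply: sqrtr_ge0.
  have DD : D ^+ 2 = v1 ^+ 2 + v2 ^+ 2 by rewrite sqr_sqrtr //; nra.
  have b1 := @cs_bound v1 v2 c s hc.
  have b2 := @cs_bound v1 v2 cj sj' hcj.
  rewrite -/D in b1 b2.
  have hh1 : `|c * cj + s * sj'| <= 1.
    have := @cs_bound c s cj sj' hcj; rewrite hc sqrtr1; done.
  move: b1 b2 hh1; rewrite !ler_norml => /andP[b1 b1'] /andP[b2 b2'] /andP[h1 h1'].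
  move=> mg.
  have eW : ((x0 i).1 + si * c - ((x0 j).1 + sj * cj)) ^+ 2 +
            ((x0 i).2 + si * s - ((x0 j).2 + sj * sj')) ^+ 2
          = D ^+ 2 + 2 * (sj * (v1 * cj + v2 * sj') - si * (v1 * c + v2 * s))
            + (sj ^+ 2 + si ^+ 2 - 2 * si * sj * (c * cj + s * sj')).
    have eE : (sj * cj - si * c) ^+ 2 + (sj * sj' - si * s) ^+ 2
              = sj ^+ 2 + si ^+ 2 - 2 * si * sj * (c * cj + s * sj').
      have -> : (sj * cj - si * c) ^+ 2 + (sj * sj' - si * s) ^+ 2
          = sj ^+ 2 * (cj ^+ 2 + sj' ^+ 2) + si ^+ 2 * (c ^+ 2 + s ^+ 2)
            - 2 * si * sj * (c * cj + s * sj') by ring.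
      by rewrite hc hcj !mulr1.
    rewrite -eE DD /v1 /v2; ring.
  rewrite eW => hd.
  have hW : D ^+ 2 + 2 * (sj * (v1 * cj + v2 * sj') - si * (v1 * c + v2 * s))
            + (sj ^+ 2 + si ^+ 2 - 2 * si * sj * (c * cj + s * sj')) <= (D + 2 * tau) ^+ 2.
    have q1 : sj * (v1 * cj + v2 * sj') <= sj * D by nra.
    have q2 : - (si * (v1 * c + v2 * s)) <= si * D.
      nra.
    have q3 : - (2 * si * sj * (c * cj + s * sj')) <= 2 * si * sj.
      have : 0 <= si * sj by apply: mulr_ge0.
      nra.
    have q4 : D + si + sj <= D + 2 * tau by lra.
    have q5 : (D + si + sj) ^+ 2 <= (D + 2 * tau) ^+ 2.
      have : 0 <= (2 * tau - si - sj) * (2 * D + 2 * tau + si + sj) by apply: mulr_ge0; lra.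
      nra.
    have -> : D ^+ 2 + 2 * (sj * (v1 * cj + v2 * sj') - si * (v1 * c + v2 * s))
            + (sj ^+ 2 + si ^+ 2 - 2 * si * sj * (c * cj + s * sj'))
            = D ^+ 2 + 2 * (sj * (v1 * cj + v2 * sj')) + 2 * (- (si * (v1 * c + v2 * s)))
            + sj ^+ 2 + si ^+ 2 + (- (2 * si * sj * (c * cj + s * sj'))) by ring.
    have e5 : (D + si + sj) ^+ 2 = D ^+ 2 + 2 * (sj * D) + 2 * (si * D) + sj ^+ 2 + si ^+ 2 + 2 * si * sj by ring.
    rewrite e5 in q5.
    lra.
  have Wle : delta < D + 2 * tau.
    apply: (lt_le_trans hd).
    rewrite [X in _ <= X](_ : _ = Num.sqrt ((D + 2 * tau) ^+ 2)); last first.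
      by rewrite sqrtr_sqr ger0_norm //; lra.
    by rewrite ler_sqrt ?sqr_ge0.
  have ehd : c * ((x0 j).1 + sj * cj - ((x0 i).1 + si * c)) +
             s * ((x0 j).2 + sj * sj' - ((x0 i).2 + si * s))
           = (c * v1 + s * v2) + sj * (c * cj + s * sj') - si.
    have -> : c * ((x0 j).1 + sj * cj - ((x0 i).1 + si * c)) +
             s * ((x0 j).2 + sj * sj' - ((x0 i).2 + si * s))
           = (c * v1 + s * v2) + sj * (c * cj + s * sj') - si * (c ^+ 2 + s ^+ 2).
      by rewrite /v1 /v2; ring.
    by rewrite hc mulr1.
  rewrite ehd => hh.
  have : kappa * D <= c * v1 + s * v2 by [].
  nra.
have lo : dm <= sig i 1.
  apply: int_lower.
  - by case: (sol i).
  - by move=> x; exact: speed01.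
  - by apply/andP; split; lra.
  - by move=> x hx; apply: fast.
rewrite (pE i 1); last by apply/andP; split; lra.
rewrite /dist2 /=.
have -> : ((x0 i).1 + sig i 1 * cos (theta i) - (x0 i).1) ^+ 2 +
          ((x0 i).2 + sig i 1 * sin (theta i) - (x0 i).2) ^+ 2 = (sig i 1) ^+ 2.
  rewrite -[X in _ = X]mulr1 -(cs1 (theta i)); ring.
rewrite sqrtr_sqr ger0_norm //; lra.
Qed.
End Dyn.
Section Main.
Variable R : realType.

Lemma ler_sin_in (x y : R) : - (pi / 2) <= x -> x <= y -> y <= pi / 2 -> sin x <= sin y.
Proof.
move=> hx xy hy; rewrite le_eqVlt in xy; case/orP: xy => [/eqP -> //|xy].
apply/ltW; rewrite ltr_sin // in_itv /=; apply/andP; split => //; lra.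
Qed.

Lemma lin_diff (a1 a2 b1 b2 A B : R) :
  a1 * A + a2 * B <= b1 * A + b2 * B -> 0 <= (b1 - a1) * A + (b2 - a2) * B.
Proof.
move=> h; have -> : (b1 - a1) * A + (b2 - a2) * B = (b1 * A + b2 * B) - (a1 * A + a2 * B) by ring.
by rewrite subr_ge0.
Qed.

Definition Fd (ph : R) (x : pt R) := x.1 * cos ph + x.2 * sin ph.

Lemma marg_from_min n (x0 : 'I_n -> pt R) i (pa pb th eps : R) :
  0 < eps -> 4 * eps <= pi -> pa + eps <= th -> th <= pa + 2 * eps ->
  pa + 3 * eps <= pb -> pb <= pa + pi / 2 ->
  (forall j, Fd pa (x0 i) <= Fd pa (x0 j)) -> (forall j, Fd pb (x0 i) <= Fd pb (x0 j)) ->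
  forall j, sin eps * dist2 (x0 i) (x0 j) <= head_dot th (x0 i) (x0 j).
Proof.
move=> e0 e4 t1 t2 b1 b2 ma mb j.
have pi0 : 0 < pi := pi_gt0 R.
set al := pb - th; set be := th - pa.
have epa : pa = th - be by rewrite /be; ring.
have epb : pb = th + al by rewrite /al; ring.
have hbe1 : eps <= be by rewrite /be; lra.
have hbe2 : be <= 2 * eps by rewrite /be; lra.
have hal1 : eps <= al by rewrite /al; lra.
have hal2 : al <= pi / 2 by rewrite /al; lra.
have hsum : 0 < al + be < pi by rewrite /al /be; apply/andP; split; lra.
clearbody al be.
have := ma j; have := mb j; rewrite /Fd epa epb !cosB !sinB !cosD !sinD.
move=> hb ha.
rewrite /dist2 /head_dot.
set v1 := (x0 j).1 - (x0 i).1; set v2 := (x0 j).2 - (x0 i).2.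
have eD : ((x0 i).1 - (x0 j).1) ^+ 2 + ((x0 i).2 - (x0 j).2) ^+ 2 = v1 ^+ 2 + v2 ^+ 2.
  by rewrite /v1 /v2; ring.
rewrite eD.
apply: (@margin_alg R (cos th) (sin th) (cos al) (sin al) (cos be) (sin be)).
- exact: cos2Dsin2.
- exact: cos2Dsin2.
- exact: cos2Dsin2.
- by rewrite -sinD; apply: sin_gt0_pi.
- apply: sin_ge0_pi; apply/andP; split; lra.
- apply: ler_sin_in; lra.
- apply: ler_sin_in; lra.
- by rewrite /v1 /v2; apply: lin_diff.
- by rewrite /v1 /v2; apply: lin_diff.
Qed.

Lemma exmin m (G : 'I_m.+1 -> R) : exists i, forall j, G i <= G j.
Proof.
case: (@extremumP R _ <=%R ord0 predT G lexx (@le_trans _ _) le_total isT) => i _ h.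
by exists i => j; apply: h.
Qed.

End Main.
Arguments Fd {R}.
Arguments exmin {R m}.

Theorem lemma2 (R : realType) (n : nat) :
  exists pmin : R, 0 < pmin /\
  forall delta : R, 0 < delta ->
  exists dmin : R, 0 < dmin /\
  forall (d : measure_display) (T : measurableType d) (P : probability T R)
         (chi : 'I_n -> T -> R),
    (forall i, uniform_0_2pi P (chi i)) ->
    mutually_independent P chi ->
  forall x0 : 'I_n -> pt R,
    ~ in_disc delta x0 ->
    exists i : 'I_n, exists A : set T,
      [/\ measurable A, (pmin%:E <= P A)%E &
        forall w, A w ->
        forall p : R -> 'I_n -> pt R,
          interval_solution delta (fun j => chi j w) x0 p ->
          dmin <= dist2 (p 1 i) (x0 i)].
Proof.
case: n => [|m].
  exists 1; split; first exact: ltr01.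
  move=> delta d0; exists 1; split; first exact: ltr01.
  move=> d T P chi _ _ x0 hx; exfalso; apply: hx; exists (0, 0) => -[] //.
have pi0 : 0 < pi := pi_gt0 R.
have n0 : 0 < (m.+1)%:R :> R by rewrite ltr0n.
set N := (m.+1)%:R : R.
set eps := pi / (6 * N).
have e0 : 0 < eps by rewrite /eps divr_gt0 // mulr_gt0 // ltr0n.
have eN : N * (3 * eps) = pi / 2.
  rewrite /eps; field; apply: lt0r_neq0; have := ler0n R m; lra.
have N1 : 1 <= N by rewrite /N ler1n.
have e4 : 4 * eps <= pi by nra.
have se0 : 0 < sin eps by apply: sin_gt0_pi; apply/andP; split; lra.
have se1 : sin eps <= 1 := sin_le1 eps.
exists (eps * (2 * pi)^-1); split.
  by rewrite mulr_gt0 // invr_gt0 mulr_gt0 // ltr0n.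
move=> delta d0; exists (Num.min 1 (sin eps * delta / 8)); split.
  by rewrite lt_min ltr01 /= divr_gt0 // mulr_gt0.
move=> d T P chi hunif hind x0 _.
pose ph (k : 'I_m.+2) : R := k%:R * (3 * eps).
have exk : forall k, exists i, forall j, Fd (ph k) (x0 i) <= Fd (ph k) (x0 j).
  by move=> k; apply: (exmin (fun i => Fd (ph k) (x0 i))).
pose g k := proj1_sig (cid (exk k)).
have gP : forall k j, Fd (ph k) (x0 (g k)) <= Fd (ph k) (x0 j).
  by move=> k; exact: (proj2_sig (cid (exk k))).
have : ~~ injectiveb g.
  apply/negP => /injectiveP inj; have := @leq_card _ _ g inj.
  by rewrite !card_ord ltnn.
case/injectivePn => a0 [b0] ab0 gab0.
have [a [b [ab gab]]] : exists a b : 'I_m.+2, (a < b)%N /\ g a = g b.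
  case: (ltngtP a0 b0) => h.
  - by exists a0, b0.
  - by exists b0, a0.
  - by exfalso; move/eqP: ab0; apply; apply: val_inj.
have hab : (a%:R : R) + 1 <= b%:R by rewrite natr1 ler_nat.
have hb : (b%:R : R) <= N by rewrite /N ler_nat -ltnS.
have ha0 : 0 <= (a%:R : R) by rewrite ler0n.
have pa0 : 0 <= ph a by rewrite /ph mulr_ge0 //; lra.
have pab : ph a + 3 * eps <= ph b by rewrite /ph; nra.
have pb2 : ph b <= pi / 2 by rewrite -eN /ph; nra.
set i := g a.
set B := (`[ph a + eps, ph a + 2 * eps])%classic : set R.
exists i, (chi i @^-1` B); split.
- case: (hunif i) => mX _.
  by have := mX measurableT B (measurable_itv _); rewrite setTI.
- case: (hunif i) => _ ->; last exact: measurable_itv.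
  rewrite setIidl; last first.
    move=> x; rewrite /B /= !in_itv /= => /andP[h1 h2]; apply/andP; split; lra.
  rewrite lebesgue_measure_itv /= lte_fin.
  have -> : ph a + eps < ph a + 2 * eps by lra.
  rewrite -EFinB -EFinM lee_fin.
  have -> : ph a + 2 * eps - (ph a + eps) = eps by ring.
  by [].
- move=> w hw p sol.
  apply: (@move_far R _ delta (sin eps) (fun j => chi j w) x0 p i) => //.
  move: hw; rewrite /B /= in_itv /= => /andP[h1 h2] j.
  apply: (@marg_from_min R _ x0 i (ph a) (ph b) (chi i w) eps) => //; try lra.
  by move=> k; rewrite /i gab; apply: gP.
Qed.
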